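(* Let $S(\mathbf x)$ be the $12\times 34$ symbolic matrix whose entry in row $i$ and column $j$ is a distinct variable if $j$ belongs to the list $R_i$ below and $0$ otherwise: $R_1=\{4,5,6,14,15,16,17,18,19,20,21\}$, $R_2=\{4,7,8,9,14,15,16,17,22,23,24,25\}$, $R_3=\{7,10,11,14,15,18,19,22,26,27\}$, $R_4=\{5,12,13,16,17,20,23,24,28,29,30\}$, $R_5=\{8,10,12,22,23,26,28,29,31,32,33\}$, $R_6=\{1,11,13,18,20,27,30,34\}$, $R_7=\{2,9,24,25,30,31,34\}$, $R_8=\{3,6,19,21,26,31,32,33,34\}$, $R_9=\{1,4,8,21,25,28,32,33\}$, $R_{10}=\{2,5,10,14,18,19,21,27,28,29,32\}$, $R_{11}=\{3,7,13,16,23,24,25,27,29\}$, $R_{12}=\{6,9,11,12,15,17,20,22,26,30,31,33,34\}$ (this is the symbolic slack matrix of the Perles polytope, an $8$-dimensional polytope with $12$ vertices and $34$ facets). Let $x_1,\dots,x_{120}$ be its variables. Then the slack ideal $$I=\langle 10\text{-minors of } S(\mathbf x)\rangle : (x_1x_2\cdots x_{120})^\infty\subseteq\mathbb{C}[x_1,\dots,x_{120}]$$ is not a prime ideal.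
   Context: The Perles polytope is the classical $8$-dimensional polytope with $12$ vertices and $34$ facets which is projectively unique and has no rational realization; it is defined by an affine Gale diagram consisting of the points $A,B,C,D,E,F,G,H$ (positive) and $F,G,H,I$ (negative) built from a regular pentagon and its pentagram, with $E,F,H,G$ four vertices of the pentagon, $I$ its center, and $A,B,C,D$ four tips of the pentagram. Its vertices are labelled $A,B,C,D,E,F,G,H,-F,-G,-H,-I$ (rows $1$ to $12$ above) and its $34$ facets (columns) correspond to the minimal positive circuits of the Gale diagram; the entry in row $i$, column $j$ of the slack matrix is nonzero exactly when the vertex $i$ does not lie on facet $j$, which is the pattern given in the claim. For a $d$-polytope, the slack ideal is the ideal of $(d+2)$-minors of the symbolic slack matrix saturated by the product of all variables; here $d=8$. *)

(* Defs.v *)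
From HB Require Import structures.
From mathcomp Require Import all_boot all_order all_algebra.
From mathcomp Require Import complex.
From mathcomp Require reals.
From mathcomp Require Import mpoly.
Set Implicit Arguments. Unset Strict Implicit. Unset Printing Implicit Defensive.
Import Order.TTheory GRing.Theory Num.Theory.
Local Open Scope ring_scope.

(* Supports R_1..R_12 of the rows of the symbolic slack matrix of the Perles
   polytope (1-based column indices, as in the paper). *)
Definition perles_rows : seq (seq nat) :=
  [:: [:: 4;5;6;14;15;16;17;18;19;20;21];
      [:: 4;7;8;9;14;15;16;17;22;23;24;25];
      [:: 7;10;11;14;15;18;19;22;26;27];
      [:: 5;12;13;16;17;20;23;24;28;29;30];
      [:: 8;10;12;22;23;26;28;29;31;32;33];
      [:: 1;11;13;18;20;27;30;34];
      [:: 2;9;24;25;30;31;34];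
      [:: 3;6;19;21;26;31;32;33;34];
      [:: 1;4;8;21;25;28;32;33];
      [:: 2;5;10;14;18;19;21;27;28;29;32];
      [:: 3;7;13;16;23;24;25;27;29];
      [:: 6;9;11;12;15;17;20;22;26;30;31;33;34] ].

Definition perles_supp (i : 'I_12) (j : 'I_34) : bool :=
  j.+1 \in nth [::] perles_rows i.

(* the variables are numbered 0..119 in row-major order over the support *)
Definition perles_var_index (i : 'I_12) (j : 'I_34) : nat :=
  \sum_(i' < 12) \sum_(j' < 34)
     [&& perles_supp i' j' & (i' < i) || ((i' == i) && (j' < j))].

Definition perles_slack (K : comRingType) : 'M[{mpoly K[120]}]_(12, 34) :=
  \matrix_(i, j) (if perles_supp i j then 'X_(inord (perles_var_index i j))
                  else 0).

Definition is_minor (T : comRingType) (m n k : nat) (A : 'M[T]_(m, n))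
  (p : T) : Prop :=
  exists (f : 'I_k -> 'I_m) (g : 'I_k -> 'I_n),
    [/\ injective f, injective g & p = \det (mxsub f g A)].

Definition ideal_gen (T : comRingType) (G : T -> Prop) (p : T) : Prop :=
  exists s : seq (T * T),
    (forall c, c \in s -> G c.2) /\ p = \sum_(c <- s) c.1 * c.2.

Definition saturation (T : comRingType) (J : T -> Prop) (u : T) (p : T) : Prop :=
  exists n : nat, J (u ^+ n * p).

Definition prime_ideal (T : comRingType) (I : T -> Prop) : Prop :=
  ~ I 1 /\ forall f g : T, I (f * g) -> I f \/ I g.

(* slack ideal of a d-polytope with symbolic slack matrix S:
   <(d+2)-minors of S> : (product of all variables)^oo *)
Definition perles_slack_ideal (K : comRingType) : {mpoly K[120]} -> Prop :=
  saturation (ideal_gen (is_minor 10 (perles_slack K)))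
             (\prod_(i < 120) 'X_i).

Lemma perles_rows_size : sumn (map size perles_rows) = 120%N.
Proof. by []. Qed.
Arguments perles_slack_ideal K : clear implicits.
Arguments perles_slack K : clear implicits.

(* Main.v *)
Require Import Defs.
From HB Require Import structures.
From mathcomp Require Import all_boot all_order all_algebra.
From mathcomp Require Import complex.
From mathcomp Require Import reals.
From mathcomp Require Import mpoly.
From mathcomp Require Import ring.
Set Implicit Arguments. Unset Strict Implicit. Unset Printing Implicit Defensive.
Local Open Scope ring_scope.
Import GRing.Theory Num.Theory.

Definition fidx (a b : nat) : nat :=
  (sumn [seq size (nth [::] perles_rows k) | k <- iota 0 a] +
   count (fun c => c <= b) (nth [::] perles_rows a))%N.

Definition Gf (i j a c : nat) : nat :=
  nat_of_bool ((c.+1 \in nth [::] perles_rows a) && ((a < i) || (a == i) && (c < j)))%N.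
Definition natsum (a b : nat) : nat :=
  sumn [seq sumn [seq Gf a b a' c | c <- iota 0 34] | a' <- iota 0 12].

Definition Sopt (a b : nat) : option nat :=
  if b.+1 \in nth [::] perles_rows a then Some (fidx a b) else None.

Lemma sum_ord_sumn (n : nat) (F : nat -> nat) :
  (\sum_(i < n) F i)%N = sumn [seq F i | i <- iota 0 n].
Proof.
by rewrite sumnE big_map -(big_mkord xpredT) /index_iota subn0.
Qed.

Lemma var_index_nat (i : 'I_12) (j : 'I_34) :
  perles_var_index i j = natsum i j.
Proof.
rewrite /perles_var_index /natsum.
transitivity (\sum_(a' < 12) \sum_(c < 34) Gf i j a' c)%N.
  by apply: eq_bigr => a' _; apply: eq_bigr => c _.
rewrite (sum_ord_sumn 12 (fun a => \sum_(c < 34) Gf i j a c)%N).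
congr sumn; apply: eq_map => a'.
by rewrite (sum_ord_sumn 34 (fun c => Gf i j a' c)).
Qed.

Definition idx_check : bool :=
  all (fun a => all (fun b => (b.+1 \in nth [::] perles_rows a) ==>
        ((natsum a b == fidx a b) && (fidx a b < 120)%N)) (iota 0 34)) (iota 0 12).

Lemma idx_checkP : idx_check.
Proof. by vm_compute. Qed.

Lemma fidx_ok (a b : nat) : (a < 12)%N -> (b < 34)%N -> b.+1 \in nth [::] perles_rows a ->
  natsum a b = fidx a b /\ (fidx a b < 120)%N.
Proof.
move=> ha hb hs.
have := idx_checkP; rewrite /idx_check => /allP /(_ a).
rewrite mem_iota add0n ha => /(_ isT) /allP /(_ b).
by rewrite mem_iota add0n hb hs => /(_ isT) /= /andP [/eqP -> ->].
Qed.

Definition prodR (R : comRingType) (x : nat -> R) (l : seq nat) : R :=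
  \prod_(k <- l) x k.
Definition interpR (R : comRingType) (x : nat -> R) (l : seq (bool * seq nat)) : R :=
  \sum_(t <- l) (if t.1 then -1 else 1) * prodR x t.2.

Section Gen.
Variable K : comRingType.
Local Notation T := {mpoly K[120]}.

Definition xv (k : nat) : T := 'X_(inord k).
Definition oint (o : option nat) : T := if o is Some k then xv k else 0.

Lemma slack_entry (a b : nat) : (a < 12)%N -> (b < 34)%N ->
  perles_slack K (inord a) (inord b) = oint (Sopt a b).
Proof.
move=> ha hb; rewrite mxE /perles_supp /Sopt !inordK //.
case: ifP => hs //=.
rewrite /xv var_index_nat !inordK //.
by have [-> _] := fidx_ok ha hb hs.
Qed.

Definition mat n (rs : seq (seq (option nat))) : 'M[T]_n :=
  \matrix_(i, j) oint (nth None (nth [::] rs i) j).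

Definition rem_at (i : nat) (s : seq (seq (option nat))) := take i s ++ drop i.+1 s.

Fixpoint ldet (n : nat) (rs : seq (seq (option nat))) : seq (bool * seq nat) :=
  match n with
  | 0 => [:: (false, [::])]
  | n'.+1 => flatten [seq (match head None (nth [::] rs i) with
                | None => [::]
                | Some v => [seq (odd i (+) t.1, v :: t.2) | t <- ldet n' (rem_at i (map behead rs))]
                end) | i <- iota 0 n'.+1]
  end.

Definition interp (l : seq (bool * seq nat)) : T := interpR xv l.

Lemma nth_rem_at (s : seq (seq (option nat))) i k :
  nth [::] (rem_at i s) k = nth [::] s (bump i k).
Proof.
rewrite /rem_at.
elim: s i k => [|a s IH] i k; first by rewrite /= !nth_nil.
case: i => [|i] /=; first by rewrite drop0 /bump ?leq0n ?add1n.
case: k => [|k] //=.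
by rewrite IH bumpS.
Qed.

Lemma nth_behead_map (rs : seq (seq (option nat))) m :
  nth [::] (map behead rs) m = behead (nth [::] rs m).
Proof. by elim: rs m => [|r rs IH] [|m] //=. Qed.

Lemma mat_rowcol n rs (i : 'I_n.+1) :
  row' i (col' ord0 (mat n.+1 rs)) = mat n (rem_at i (map behead rs)).
Proof.
apply/matrixP => k l; rewrite !mxE /= nth_rem_at nth_behead_map.
by rewrite nth_behead.
Qed.

Lemma ldetS n rs : ldet n.+1 rs = flatten [seq (match head None (nth [::] rs i) with
                | None => [::]
                | Some v => [seq (odd i (+) t.1, v :: t.2) | t <- ldet n (rem_at i (map behead rs))]
                end) | i <- iota 0 n.+1].
Proof. by []. Qed.

Lemma ldetP n rs : interp (ldet n rs) = \det (mat n rs).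
Proof.
elim: n rs => [|n IH] rs.
  by rewrite det_mx00 /interp /interpR /prodR /= big_cons big_nil big_nil mulr1 addr0.
rewrite (expand_det_col _ ord0) ldetS /interp /interpR big_flatten big_map.
have -> : iota 0 n.+1 = index_iota 0 n.+1 by rewrite /index_iota subn0.
rewrite big_mkord; apply: eq_bigr => i _.
rewrite /cofactor mat_rowcol -IH mxE nth0.
case: (head None (nth [::] rs i)) => [v|]; last by rewrite big_nil mul0r.
rewrite big_map /interp /interpR mulr_sumr mulr_sumr; apply: eq_bigr => t _ /=.
rewrite /prodR big_cons addn0 -signr_odd /=.
by case: (odd i); case: t.1 => /=; rewrite ?expr0 ?expr1; ring.
Qed.

End Gen.

Section Ideal.
Variable K : comRingType.
Local Notation T := {mpoly K[120]}.
Local Notation S := (perles_slack K).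
Local Notation J := (ideal_gen (is_minor 10 (perles_slack K))).
Local Notation I := (perles_slack_ideal K).
Local Notation u := (\prod_(i < 120) ('X_i : T)).

Definition rowsof (rl cl : seq nat) := [seq [seq Sopt a b | b <- cl] | a <- rl].

Lemma minor_I (rl cl : seq nat) :
  size rl = 10%N -> size cl = 10%N -> uniq rl -> uniq cl ->
  all (fun a => a < 12)%N rl -> all (fun b => b < 34)%N cl ->
  I (interp K (ldet 10 (rowsof rl cl))).
Proof.
move=> szr szc ur uc ar ac.
have hr (i : 'I_10) : (nth 0%N rl i < 12)%N.
  by apply: (allP ar); apply: mem_nth; rewrite szr.
have hc (i : 'I_10) : (nth 0%N cl i < 34)%N.
  by apply: (allP ac); apply: mem_nth; rewrite szc.
pose f := fun i : 'I_10 => (inord (nth 0%N rl i) : 'I_12).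
pose g := fun i : 'I_10 => (inord (nth 0%N cl i) : 'I_34).
exists 0%N; rewrite expr0 mul1r.
exists [:: (1, \det (mxsub f g S))]; split.
  move=> c; rewrite inE => /eqP -> /=; exists f, g; split => //.
    move=> i j /(congr1 (@nat_of_ord 12)); rewrite /f !inordK // => /eqP.
    by rewrite nth_uniq ?szr // => /eqP /val_inj.
  move=> i j /(congr1 (@nat_of_ord 34)); rewrite /g !inordK // => /eqP.
  by rewrite nth_uniq ?szc // => /eqP /val_inj.
rewrite big_seq1 mul1r ldetP; congr (\det _); apply/matrixP => i j.
rewrite [RHS]mxE [LHS]mxE /f /g slack_entry // /rowsof (nth_map 0%N) ?szr //.
by rewrite (nth_map 0%N) ?szc.
Qed.

Lemma J_add p q : J p -> J q -> J (p + q).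
Proof.
move=> [s1 [h1 ->]] [s2 [h2 ->]]; exists (s1 ++ s2); split; last by rewrite big_cat.
by move=> c; rewrite mem_cat => /orP [/h1|/h2].
Qed.

Lemma J_mul r p : J p -> J (r * p).
Proof.
move=> [s [h ->]]; exists [seq (r * c.1, c.2) | c <- s]; split.
  by move=> c /mapP [c' /h hc' ->].
by rewrite big_map mulr_sumr; apply: eq_bigr => c _; rewrite mulrA.
Qed.

Lemma I_add p q : I p -> I q -> I (p + q).
Proof.
move=> [n hn] [m hm]; exists (n + m)%N.
have -> : u ^+ (n + m) * (p + q) = u ^+ m * (u ^+ n * p) + u ^+ n * (u ^+ m * q).
  by rewrite exprD; ring.
by apply: J_add; apply: J_mul.
Qed.

Lemma I_mul r p : I p -> I (r * p).
Proof.
move=> [n hn]; exists n.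
have -> : u ^+ n * (r * p) = r * (u ^+ n * p) by ring.
exact: J_mul.
Qed.

Lemma I_eq p q : p = q -> I p -> I q.
Proof. by move=> ->. Qed.

Lemma I_opp p : I (- p) -> I p.
Proof. by move=> h; apply: (I_eq _ (I_mul (-1) h)); ring. Qed.

Lemma I_cancel k p : (k < 120)%N -> I (xv K k * p) -> I p.
Proof.
move=> hk [n hn]; exists n.+1.
have hu : u = xv K k * \prod_(i < 120 | i != inord k) ('X_i : T).
  by rewrite (bigD1 (inord k)) //.
have -> : u ^+ n.+1 * p = (\prod_(i < 120 | i != inord k) ('X_i : T)) * (u ^+ n * (xv K k * p)).
  by rewrite exprSr; set v := u ^+ n; rewrite hu; ring.
exact: J_mul.
Qed.

Lemma I_cancel_list (l : seq nat) p : all (fun k => k < 120)%N l ->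
  I (prodR (xv K) l * p) -> I p.
Proof.
elim: l p => [|k l IH] p; first by rewrite /prodR big_nil mul1r.
move=> /= /andP [hk hl]; rewrite /prodR big_cons -mulrA => h.
by apply: (IH _ hl); apply: (I_cancel hk).
Qed.

End Ideal.
Section Polys.
Variable (R : comRingType) (x : nat -> R).
Definition pT19 : R := - (x 18%N * x 34%N * x 48%N) + (x 18%N * x 39%N * x 46%N) + - (x 20%N * x 37%N * x 46%N).
Definition pT39 : R := - (x 34%N * x 48%N * x 114%N) + (x 39%N * x 46%N * x 114%N) + - (x 39%N * x 47%N * x 110%N).
Definition pb1 : R := (x 19%N * x 44%N) + - (x 13%N * x 47%N).
Definition pb2 : R := (x 20%N * x 44%N) + - (x 13%N * x 48%N).
Definition pb3 : R := (x 14%N * x 112%N) + - (x 18%N * x 108%N).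
Definition pb4 : R := (x 19%N * x 108%N) + - (x 14%N * x 114%N).
Definition pb5 : R := (x 37%N * x 110%N) + - (x 34%N * x 112%N).
Definition pT : R := (x 20%N * x 37%N * x 47%N * x 110%N) - (x 18%N * x 34%N * x 48%N * x 114%N).
Definition pA : R := - (x 18%N * x 34%N * x 48%N).
Definition pB : R := x 18%N * x 39%N * x 46%N.
Definition pC : R := - (x 20%N * x 37%N * x 46%N).
Definition pQ2 : R := pA * pC + pB * pC - pA * pB.
Definition t1 : R := x 18%N * x 34%N * x 48%N.
Definition t3 : R := x 20%N * x 37%N * x 46%N.
Definition pq : R := t3 * t3 - t3 * t1 - t1 * t1.
Lemma e_T19 : interpR x [:: (true, [:: 34; 18; 48; 31; 80; 56; 95; 63; 2; 70]); (false, [:: 46; 18; 39; 31; 80; 56; 95; 63; 2; 70]); (true, [:: 46; 37; 20; 31; 80; 56; 95; 63; 2; 70])] = prodR x [:: 2; 31; 56; 63; 70; 80; 95] * pT19.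
Proof. rewrite /interpR /prodR /pT19 !big_cons !big_nil /=; ring. Qed.
Lemma e_T39 : interpR x [:: (true, [:: 34; 114; 48; 56; 74; 4; 86; 65; 88; 23]); (false, [:: 46; 114; 39; 56; 74; 4; 86; 65; 88; 23]); (true, [:: 110; 47; 39; 56; 74; 4; 86; 65; 88; 23])] = prodR x [:: 4; 23; 56; 65; 74; 86; 88] * pT39.
Proof. rewrite /interpR /prodR /pT39 !big_cons !big_nil /=; ring. Qed.
Lemma e_b1 : interpR x [:: (true, [:: 13; 4; 47; 37; 64; 91; 76; 25; 98; 55]); (false, [:: 44; 4; 19; 37; 64; 91; 76; 25; 98; 55])] = prodR x [:: 25; 37; 55; 64; 76; 91; 98; 4] * pb1.
Proof. rewrite /interpR /prodR /pb1 !big_cons !big_nil /=; ring. Qed.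
Lemma e_b2 : interpR x [:: (true, [:: 13; 5; 48; 95; 32; 110; 35; 76; 66; 79]); (false, [:: 44; 5; 20; 95; 32; 110; 35; 76; 66; 79])] = prodR x [:: 32; 35; 66; 76; 79; 95; 110; 5] * pb2.
Proof. rewrite /interpR /prodR /pb2 !big_cons !big_nil /=; ring. Qed.
Lemma e_b3 : interpR x [:: (false, [:: 1; 14; 112; 103; 80; 71; 55; 25; 53; 87]); (true, [:: 1; 108; 18; 103; 80; 71; 55; 25; 53; 87])] = prodR x [:: 25; 53; 55; 71; 80; 87; 103; 1] * pb3.
Proof. rewrite /interpR /prodR /pb3 !big_cons !big_nil /=; ring. Qed.
Lemma e_b4 : interpR x [:: (true, [:: 14; 3; 114; 75; 45; 34; 59; 106; 81; 63]); (false, [:: 108; 3; 19; 75; 45; 34; 59; 106; 81; 63])] = prodR x [:: 34; 45; 59; 63; 75; 81; 106; 3] * pb4.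
Proof. rewrite /interpR /prodR /pb4 !big_cons !big_nil /=; ring. Qed.
Lemma e_b5 : interpR x [:: (true, [:: 34; 27; 112; 77; 100; 95; 69; 0; 55; 44]); (false, [:: 110; 27; 37; 77; 100; 95; 69; 0; 55; 44])] = prodR x [:: 0; 44; 55; 69; 77; 95; 100; 27] * pb5.
Proof. rewrite /interpR /prodR /pb5 !big_cons !big_nil /=; ring. Qed.
Lemma e_T : x 13%N * x 14%N * x 44%N * pT =
  - (x 14%N * x 20%N * x 37%N * x 44%N * x 110%N) * pb1 + (x 14%N * x 19%N * x 37%N * x 44%N * x 110%N) * pb2
  + (x 13%N * x 14%N * x 19%N * x 44%N * x 48%N) * pb5 + (x 13%N * x 19%N * x 34%N * x 44%N * x 48%N) * pb3
  + (x 13%N * x 18%N * x 34%N * x 44%N * x 48%N) * pb4.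
Proof. rewrite /pT /pb1 /pb2 /pb3 /pb4 /pb5; ring. Qed.
Lemma e_Q2 : - (x 34%N * x 48%N * x 114%N) * pQ2 = pA * pC * pT39 + (- pA) * (x 39%N * x 46%N * pT).
Proof. rewrite /pQ2 /pA /pB /pC /pT39 /pT; ring. Qed.
Lemma e_q : pq = pC * pT19 + (- pQ2) + (- pA) * pT19.
Proof. rewrite /pq /t1 /t3 /pQ2 /pA /pB /pC /pT19; ring. Qed.
End Polys.

Section Deriv.
Variable K : comRingType.
Local Notation I := (perles_slack_ideal K).
Local Notation x := (xv K).
Lemma I_T19 : I (pT19 x).
Proof.
have h := @minor_I K [:: 1; 3; 4; 2; 8; 5; 9; 6; 0; 7] [:: 11; 16; 22; 25; 3; 10; 27; 1; 5; 2] erefl erefl isT isT isT isT.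
have e : ldet 10 (rowsof [:: 1; 3; 4; 2; 8; 5; 9; 6; 0; 7] [:: 11; 16; 22; 25; 3; 10; 27; 1; 5; 2]) = [:: (true, [:: 34; 18; 48; 31; 80; 56; 95; 63; 2; 70]); (false, [:: 46; 18; 39; 31; 80; 56; 95; 63; 2; 70]); (true, [:: 46; 37; 20; 31; 80; 56; 95; 63; 2; 70])] by vm_compute.
rewrite e /interp e_T19 in h.
exact: (@I_cancel_list K [:: 2; 31; 56; 63; 70; 80; 95] _ isT h).
Qed.
Lemma I_T39 : I (pT39 x).
Proof.
have h := @minor_I K [:: 3; 4; 11; 5; 7; 0; 8; 6; 9; 2] [:: 11; 21; 22; 10; 25; 14; 32; 23; 4; 6] erefl erefl isT isT isT isT.
have e : ldet 10 (rowsof [:: 3; 4; 11; 5; 7; 0; 8; 6; 9; 2] [:: 11; 21; 22; 10; 25; 14; 32; 23; 4; 6]) = [:: (true, [:: 34; 114; 48; 56; 74; 4; 86; 65; 88; 23]); (false, [:: 46; 114; 39; 56; 74; 4; 86; 65; 88; 23]); (true, [:: 110; 47; 39; 56; 74; 4; 86; 65; 88; 23])] by vm_compute.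
rewrite e /interp e_T39 in h.
exact: (@I_cancel_list K [:: 4; 23; 56; 65; 74; 86; 88] _ isT h).
Qed.
Lemma I_b1 : I (pb1 x).
Proof.
have h := @minor_I K [:: 0; 1; 4; 3; 6; 9; 7; 2; 10; 5] [:: 7; 14; 21; 16; 8; 17; 31; 10; 2; 0] erefl erefl isT isT isT isT.
have e : ldet 10 (rowsof [:: 0; 1; 4; 3; 6; 9; 7; 2; 10; 5] [:: 7; 14; 21; 16; 8; 17; 31; 10; 2; 0]) = [:: (true, [:: 13; 4; 47; 37; 64; 91; 76; 25; 98; 55]); (false, [:: 44; 4; 19; 37; 64; 91; 76; 25; 98; 55])] by vm_compute.
rewrite e /interp e_b1 in h.
exact: (@I_cancel_list K [:: 25; 37; 55; 64; 76; 91; 98; 4] _ isT h).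
Qed.
Lemma I_b2 : I (pb2 x).
Proof.
have h := @minor_I K [:: 0; 1; 4; 9; 2; 11; 3; 7; 6; 8] [:: 7; 15; 22; 27; 26; 11; 12; 31; 24; 0] erefl erefl isT isT isT isT.
have e : ldet 10 (rowsof [:: 0; 1; 4; 9; 2; 11; 3; 7; 6; 8] [:: 7; 15; 22; 27; 26; 11; 12; 31; 24; 0]) = [:: (true, [:: 13; 5; 48; 95; 32; 110; 35; 76; 66; 79]); (false, [:: 44; 5; 20; 95; 32; 110; 35; 76; 66; 79])] by vm_compute.
rewrite e /interp e_b2 in h.
exact: (@I_cancel_list K [:: 32; 35; 66; 76; 79; 95; 110; 5] _ isT h).
Qed.
Lemma I_b3 : I (pb3 x).
Proof.
have h := @minor_I K [:: 0; 1; 11; 10; 8; 7; 5; 2; 4; 9] [:: 4; 8; 16; 23; 3; 5; 0; 10; 31; 1] erefl erefl isT isT isT isT.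
have e : ldet 10 (rowsof [:: 0; 1; 11; 10; 8; 7; 5; 2; 4; 9] [:: 4; 8; 16; 23; 3; 5; 0; 10; 31; 1]) = [:: (false, [:: 1; 14; 112; 103; 80; 71; 55; 25; 53; 87]); (true, [:: 1; 108; 18; 103; 80; 71; 55; 25; 53; 87])] by vm_compute.
rewrite e /interp e_b3 in h.
exact: (@I_cancel_list K [:: 25; 53; 55; 71; 80; 87; 103; 1] _ isT h).
Qed.
Lemma I_b4 : I (pb4 x).
Proof.
have h := @minor_I K [:: 0; 1; 11; 7; 4; 3; 5; 10; 8; 6] [:: 8; 13; 21; 30; 9; 11; 19; 28; 7; 1] erefl erefl isT isT isT isT.
have e : ldet 10 (rowsof [:: 0; 1; 11; 7; 4; 3; 5; 10; 8; 6] [:: 8; 13; 21; 30; 9; 11; 19; 28; 7; 1]) = [:: (true, [:: 14; 3; 114; 75; 45; 34; 59; 106; 81; 63]); (false, [:: 108; 3; 19; 75; 45; 34; 59; 106; 81; 63])] by vm_compute.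
rewrite e /interp e_b4 in h.
exact: (@I_cancel_list K [:: 34; 45; 59; 63; 75; 81; 106; 3] _ isT h).
Qed.
Lemma I_b5 : I (pb5 x).
Proof.
have h := @minor_I K [:: 2; 3; 11; 7; 10; 9; 6; 0; 5; 4] [:: 11; 14; 16; 32; 12; 27; 33; 3; 0; 7] erefl erefl isT isT isT isT.
have e : ldet 10 (rowsof [:: 2; 3; 11; 7; 10; 9; 6; 0; 5; 4] [:: 11; 14; 16; 32; 12; 27; 33; 3; 0; 7]) = [:: (true, [:: 34; 27; 112; 77; 100; 95; 69; 0; 55; 44]); (false, [:: 110; 27; 37; 77; 100; 95; 69; 0; 55; 44])] by vm_compute.
rewrite e /interp e_b5 in h.
exact: (@I_cancel_list K [:: 0; 44; 55; 69; 77; 95; 100; 27] _ isT h).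
Qed.
Lemma I_T : I (pT x).
Proof.
apply: (@I_cancel_list K [:: 13; 14; 44] _ isT).
have -> : prodR x [:: 13; 14; 44] * pT x = x 13%N * x 14%N * x 44%N * pT x.
  by rewrite /prodR !big_cons big_nil mulr1 !mulrA.
rewrite e_T.
apply: I_add; [apply: I_add; [apply: I_add; [apply: I_add|]|]|]; apply: I_mul.
- exact: I_b1.
- exact: I_b2.
- exact: I_b5.
- exact: I_b3.
- exact: I_b4.
Qed.

Lemma I_Q2 : I (pQ2 x).
Proof.
apply: (@I_cancel_list K [:: 34; 48; 114] _ isT).
apply: I_opp.
have -> : - (prodR x [:: 34; 48; 114] * pQ2 x) = - (x 34%N * x 48%N * x 114%N) * pQ2 x.
  by rewrite /prodR !big_cons big_nil mulr1 !mulrA mulNr.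
rewrite e_Q2.
apply: I_add; apply: I_mul; first exact: I_T39.
exact: (I_mul _ I_T).
Qed.

Lemma I_q : I (pq x).
Proof.
rewrite e_q.
apply: I_add; [apply: I_add|]; last by apply: I_mul; exact: I_T19.
- by apply: I_mul; exact: I_T19.
- by apply: (I_eq (mulN1r _)); apply: I_mul; exact: I_Q2.
Qed.
End Deriv.

(* ---------- arithmetic in Z[r], r^2 = r + 1 ---------- *)
Definition zadd (a b : int * int) : int * int := (a.1 + b.1, a.2 + b.2)%R.
Definition zmul (a b : int * int) : int * int :=
  (a.1 * b.1 + a.2 * b.2, a.1 * b.2 + a.2 * b.1 + a.2 * b.2)%R.
Definition zconj (a : int * int) : int * int := (a.1 + a.2, - a.2)%R.
Definition znorm (a : int * int) : int := (a.1 * a.1 + a.1 * a.2 - a.2 * a.2)%R.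
Definition zdotl (l : seq (int * int * (int * int))) : int * int :=
  foldr (fun ab acc => zadd (zmul ab.1 ab.2) acc) (0, 0)%R l.

Definition ptab : seq (int * int) := [:: (Posz 0, Negz 0); (Posz 4, Posz 3); (Negz 0, Posz 0); (Posz 1, Posz 3); (Posz 1, Posz 2); (Posz 2, Posz 1); (Posz 2, Posz 3); (Posz 1, Negz 1); (Negz 1, Negz 0); (Negz 0, Negz 0); (Negz 0, Posz 2); (Negz 0, Negz 0); (Negz 0, Negz 0); (Posz 1, Posz 0); (Negz 0, Posz 2); (Posz 2, Posz 1); (Posz 2, Posz 3); (Posz 1, Posz 3); (Posz 1, Posz 2); (Posz 1, Posz 1); (Negz 0, Posz 2); (Posz 2, Posz 1); (Posz 1, Negz 1); (Posz 0, Negz 0); (Negz 4, Negz 2); (Negz 0, Negz 0); (Posz 1, Posz 3); (Posz 1, Posz 2); (Negz 1, Negz 0); (Posz 1, Negz 1); (Posz 1, Posz 1); (Negz 0, Posz 1); (Negz 0, Posz 2); (Negz 0, Posz 4); (Posz 1, Negz 0); (Posz 7, Negz 0); (Posz 1, Posz 3); (Posz 1, Posz 2); (Negz 0, Negz 0); (Posz 2, Posz 1); (Negz 0, Posz 2); (Negz 2, Posz 1); (Negz 0, Posz 2); (Posz 1, Negz 0); (Posz 0, Posz 1); (Negz 2, Negz 7); (Posz 0, Negz 0); (Posz 1, Posz 2); (Posz 2, Posz 1); (Posz 1, Posz 1); (Negz 0, Negz 2); (Posz 2, Posz 1); (Posz 1, Negz 0); (Negz 0, Posz 2); (Posz 1,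 Posz 0); (Posz 1, Posz 0); (Negz 1, Negz 2); (Negz 0, Posz 6); (Negz 1, Negz 0); (Negz 0, Negz 1); (Posz 2, Posz 1); (Negz 0, Negz 0); (Posz 1, Negz 0); (Posz 1, Posz 0); (Posz 1, Posz 3); (Posz 2, Posz 1); (Posz 1, Negz 1); (Negz 0, Negz 0); (Posz 1, Negz 0); (Negz 0, Posz 0); (Posz 1, Posz 0); (Negz 0, Negz 0); (Negz 1, Negz 0); (Posz 2, Posz 1); (Posz 1, Posz 1); (Negz 0, Posz 0); (Posz 3, Negz 0); (Posz 1, Posz 0); (Posz 1, Negz 0); (Posz 1, Posz 0); (Negz 0, Negz 1); (Posz 1, Posz 1); (Negz 0, Posz 2); (Posz 1, Negz 1); (Negz 1, Negz 0); (Negz 0, Posz 2); (Negz 0, Posz 1); (Posz 1, Posz 0); (Posz 3, Posz 7); (Negz 7, Negz 10); (Posz 4, Posz 7); (Negz 2, Negz 3); (Negz 2, Negz 3); (Posz 2, Posz 1); (Posz 2, Posz 1); (Negz 1, Negz 0); (Negz 0, Posz 2); (Posz 3, Negz 0); (Posz 1, Posz 0); (Negz 0, Negz 1); (Posz 6, Posz 5); (Posz 4, Posz 7); (Posz 3, Posz 4); (Posz 3, Posz 4); (Posz 1, Negz 1); (Negz 0, Posz 2); (Posz 2, Posz 1); (Negz 1, Negz 0); (Posz 0, Posz 5); (Negz 2, Negz 3); (Posz 1, Negz 1); (Posz 4, Posz 7); (Posz 4, Posz 7); (Negz 2, Negz 3); (Posz 3, Posz 4); (Posz 1, Posz 3);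 (Negz 0, Negz 2); (Posz 1, Negz 1); (Posz 3, Negz 0); (Posz 1, Negz 1)].
Definition Ktab : seq (seq (int * int)) :=
  [:: [:: (Posz 1, Posz 0); (Posz 0, Posz 1); (Posz 1, Negz 0); (Negz 1, Posz 1); (Posz 0, Posz 0); (Posz 2, Negz 0); (Posz 2, Negz 0); (Posz 0, Posz 0); (Negz 1, Posz 1)];
  [:: (Posz 0, Posz 1); (Posz 1, Posz 0); (Negz 1, Posz 1); (Posz 1, Negz 0); (Posz 2, Negz 0); (Posz 0, Posz 0); (Negz 0, Posz 1); (Negz 1, Posz 1); (Posz 0, Posz 0)];
  [:: (Posz 1, Posz 0); (Posz 0, Posz 0); (Posz 0, Posz 0); (Posz 0, Posz 0); (Posz 0, Posz 0); (Posz 0, Posz 0); (Posz 0, Posz 0); (Posz 0, Posz 0); (Posz 0, Posz 0)];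
  [:: (Posz 0, Posz 0); (Posz 1, Posz 0); (Posz 0, Posz 0); (Posz 0, Posz 0); (Posz 0, Posz 0); (Posz 0, Posz 0); (Posz 0, Posz 0); (Posz 0, Posz 0); (Posz 0, Posz 0)];
  [:: (Posz 0, Posz 0); (Posz 0, Posz 0); (Posz 1, Posz 0); (Posz 0, Posz 0); (Posz 0, Posz 0); (Posz 0, Posz 0); (Posz 0, Posz 0); (Posz 0, Posz 0); (Posz 0, Posz 0)];
  [:: (Posz 0, Posz 0); (Posz 0, Posz 0); (Posz 0, Posz 0); (Posz 1, Posz 0); (Posz 0, Posz 0); (Posz 0, Posz 0); (Posz 0, Posz 0); (Posz 0, Posz 0); (Posz 0, Posz 0)];
  [:: (Posz 0, Posz 0); (Posz 0, Posz 0); (Posz 0, Posz 0); (Posz 0, Posz 0); (Posz 1, Posz 0); (Posz 0, Posz 0); (Posz 0, Posz 0); (Posz 0, Posz 0); (Posz 0, Posz 0)];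
  [:: (Posz 0, Posz 0); (Posz 0, Posz 0); (Posz 0, Posz 0); (Posz 0, Posz 0); (Posz 0, Posz 0); (Posz 1, Posz 0); (Posz 0, Posz 0); (Posz 0, Posz 0); (Posz 0, Posz 0)];
  [:: (Posz 0, Posz 0); (Posz 0, Posz 0); (Posz 0, Posz 0); (Posz 0, Posz 0); (Posz 0, Posz 0); (Posz 0, Posz 0); (Posz 1, Posz 0); (Posz 0, Posz 0); (Posz 0, Posz 0)];
  [:: (Posz 0, Posz 0); (Posz 0, Posz 0); (Posz 0, Posz 0); (Posz 0, Posz 0); (Posz 0, Posz 0); (Posz 0, Posz 0); (Posz 0, Posz 0); (Posz 1, Posz 0); (Posz 0, Posz 0)];
  [:: (Posz 0, Posz 0); (Posz 0, Posz 0); (Posz 0, Posz 0); (Posz 0, Posz 0); (Posz 0, Posz 0); (Posz 0, Posz 0); (Posz 0, Posz 0); (Posz 0, Posz 0); (Posz 1, Posz 0)];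
  [:: (Posz 2, Posz 1); (Posz 2, Posz 1); (Posz 0, Posz 0); (Posz 0, Posz 0); (Posz 3, Negz 0); (Posz 3, Negz 0); (Posz 0, Posz 0); (Negz 2, Posz 1); (Negz 2, Posz 1)]].
Definition Ctab : seq (seq (int * int)) :=
  [:: [:: (Posz 0, Posz 0); (Posz 0, Posz 0); (Posz 0, Posz 0); (Posz 0, Posz 0); (Posz 0, Posz 0); (Posz 0, Posz 0); (Posz 0, Negz 0); (Posz 0, Posz 0); (Posz 0, Posz 0); (Negz 4, Negz 2); (Negz 0, Negz 0); (Posz 0, Posz 0); (Posz 0, Posz 0); (Posz 1, Posz 3); (Posz 1, Posz 2); (Posz 0, Posz 0); (Posz 0, Posz 0); (Negz 1, Negz 0); (Posz 1, Negz 1); (Posz 0, Posz 0); (Posz 0, Posz 0); (Posz 1, Posz 1); (Posz 0, Posz 0); (Posz 0, Posz 0); (Posz 0, Posz 0); (Negz 0, Posz 1); (Negz 0, Posz 2); (Posz 0, Posz 0); (Posz 0, Posz 0); (Posz 0, Posz 0); (Posz 0, Posz 0); (Posz 0, Posz 0); (Posz 0, Posz 0); (Posz 0, Posz 0)];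
  [:: (Posz 0, Posz 0); (Posz 0, Posz 0); (Posz 0, Posz 0); (Posz 0, Posz 0); (Negz 0, Posz 4); (Posz 0, Posz 0); (Posz 0, Posz 0); (Posz 0, Posz 0); (Posz 0, Posz 0); (Posz 0, Posz 0); (Posz 0, Posz 0); (Posz 1, Negz 0); (Posz 7, Negz 0); (Posz 0, Posz 0); (Posz 0, Posz 0); (Posz 1, Posz 3); (Posz 1, Posz 2); (Posz 0, Posz 0); (Posz 0, Posz 0); (Negz 0, Negz 0); (Posz 0, Posz 0); (Posz 0, Posz 0); (Posz 2, Posz 1); (Negz 0, Posz 2); (Posz 0, Posz 0); (Posz 0, Posz 0); (Posz 0, Posz 0); (Negz 2, Posz 1); (Negz 0, Posz 2); (Posz 1, Negz 0); (Posz 0, Posz 0); (Posz 0, Posz 0); (Posz 0, Posz 0); (Posz 0, Posz 0)];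
  [:: (Posz 0, Posz 0); (Posz 0, Posz 0); (Posz 0, Posz 0); (Posz 0, Posz 0); (Posz 0, Posz 0); (Posz 0, Posz 0); (Posz 0, Posz 0); (Posz 0, Posz 1); (Posz 0, Posz 0); (Negz 2, Negz 7); (Posz 0, Posz 0); (Posz 0, Negz 0); (Posz 0, Posz 0); (Posz 0, Posz 0); (Posz 0, Posz 0); (Posz 0, Posz 0); (Posz 0, Posz 0); (Posz 0, Posz 0); (Posz 0, Posz 0); (Posz 0, Posz 0); (Posz 0, Posz 0); (Posz 1, Posz 2); (Posz 2, Posz 1); (Posz 0, Posz 0); (Posz 0, Posz 0); (Posz 1, Posz 1); (Posz 0, Posz 0); (Negz 0, Negz 2); (Posz 2, Posz 1); (Posz 0, Posz 0); (Posz 1, Negz 0); (Negz 0, Posz 2); (Posz 1, Posz 0); (Posz 0, Posz 0)];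
  [:: (Posz 1, Posz 0); (Posz 0, Posz 0); (Posz 0, Posz 0); (Posz 0, Posz 0); (Posz 0, Posz 0); (Posz 0, Posz 0); (Posz 0, Posz 0); (Posz 0, Posz 0); (Posz 0, Posz 0); (Posz 0, Posz 0); (Negz 1, Negz 2); (Posz 0, Posz 0); (Negz 0, Posz 6); (Posz 0, Posz 0); (Posz 0, Posz 0); (Posz 0, Posz 0); (Posz 0, Posz 0); (Negz 1, Negz 0); (Posz 0, Posz 0); (Negz 0, Negz 1); (Posz 0, Posz 0); (Posz 0, Posz 0); (Posz 0, Posz 0); (Posz 0, Posz 0); (Posz 0, Posz 0); (Posz 0, Posz 0); (Posz 2, Posz 1); (Posz 0, Posz 0); (Posz 0, Posz 0); (Negz 0, Negz 0); (Posz 0, Posz 0); (Posz 0, Posz 0); (Posz 0, Posz 0); (Posz 1, Negz 0)];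
  [:: (Posz 0, Posz 0); (Posz 1, Posz 0); (Posz 0, Posz 0); (Posz 0, Posz 0); (Posz 0, Posz 0); (Posz 0, Posz 0); (Posz 0, Posz 0); (Posz 0, Posz 0); (Posz 1, Posz 3); (Posz 0, Posz 0); (Posz 0, Posz 0); (Posz 0, Posz 0); (Posz 0, Posz 0); (Posz 0, Posz 0); (Posz 0, Posz 0); (Posz 0, Posz 0); (Posz 0, Posz 0); (Posz 0, Posz 0); (Posz 0, Posz 0); (Posz 0, Posz 0); (Posz 0, Posz 0); (Posz 0, Posz 0); (Posz 0, Posz 0); (Posz 2, Posz 1); (Posz 1, Negz 1); (Posz 0, Posz 0); (Posz 0, Posz 0); (Posz 0, Posz 0); (Posz 0, Posz 0); (Negz 0, Negz 0); (Posz 1, Negz 0); (Posz 0, Posz 0); (Posz 0, Posz 0); (Negz 0, Posz 0)];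
  [:: (Posz 0, Posz 0); (Posz 0, Posz 0); (Posz 1, Posz 0); (Posz 0, Posz 0); (Posz 0, Posz 0); (Negz 0, Negz 0); (Posz 0, Posz 0); (Posz 0, Posz 0); (Posz 0, Posz 0); (Posz 0, Posz 0); (Posz 0, Posz 0); (Posz 0, Posz 0); (Posz 0, Posz 0); (Posz 0, Posz 0); (Posz 0, Posz 0); (Posz 0, Posz 0); (Posz 0, Posz 0); (Posz 0, Posz 0); (Negz 1, Negz 0); (Posz 0, Posz 0); (Posz 2, Posz 1); (Posz 0, Posz 0); (Posz 0, Posz 0); (Posz 0, Posz 0); (Posz 0, Posz 0); (Posz 1, Posz 1); (Posz 0, Posz 0); (Posz 0, Posz 0); (Posz 0, Posz 0); (Posz 0, Posz 0); (Negz 0, Posz 0); (Posz 3, Negz 0); (Posz 1, Posz 0); (Posz 1, Negz 0)];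
  [:: (Posz 1, Posz 0); (Posz 0, Posz 0); (Posz 0, Posz 0); (Negz 0, Negz 1); (Posz 0, Posz 0); (Posz 0, Posz 0); (Posz 0, Posz 0); (Posz 1, Posz 1); (Posz 0, Posz 0); (Posz 0, Posz 0); (Posz 0, Posz 0); (Posz 0, Posz 0); (Posz 0, Posz 0); (Posz 0, Posz 0); (Posz 0, Posz 0); (Posz 0, Posz 0); (Posz 0, Posz 0); (Posz 0, Posz 0); (Posz 0, Posz 0); (Posz 0, Posz 0); (Negz 0, Posz 2); (Posz 0, Posz 0); (Posz 0, Posz 0); (Posz 0, Posz 0); (Posz 1, Negz 1); (Posz 0, Posz 0); (Posz 0, Posz 0); (Negz 1, Negz 0); (Posz 0, Posz 0); (Posz 0, Posz 0); (Posz 0, Posz 0); (Negz 0, Posz 2); (Negz 0, Posz 1); (Posz 0, Posz 0)];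
  [:: (Posz 0, Posz 0); (Posz 1, Posz 0); (Posz 0, Posz 0); (Posz 0, Posz 0); (Posz 3, Posz 7); (Posz 0, Posz 0); (Posz 0, Posz 0); (Posz 0, Posz 0); (Posz 0, Posz 0); (Negz 7, Negz 10); (Posz 0, Posz 0); (Posz 0, Posz 0); (Posz 0, Posz 0); (Posz 4, Posz 7); (Posz 0, Posz 0); (Posz 0, Posz 0); (Posz 0, Posz 0); (Negz 2, Negz 3); (Negz 2, Negz 3); (Posz 0, Posz 0); (Posz 2, Posz 1); (Posz 0, Posz 0); (Posz 0, Posz 0); (Posz 0, Posz 0); (Posz 0, Posz 0); (Posz 0, Posz 0); (Posz 2, Posz 1); (Negz 1, Negz 0); (Negz 0, Posz 2); (Posz 0, Posz 0); (Posz 0, Posz 0); (Posz 3, Negz 0); (Posz 0, Posz 0); (Posz 0, Posz 0)];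
  [:: (Posz 0, Posz 0); (Posz 0, Posz 0); (Posz 1, Posz 0); (Posz 0, Posz 0); (Posz 0, Posz 0); (Posz 0, Posz 0); (Negz 0, Negz 1); (Posz 0, Posz 0); (Posz 0, Posz 0); (Posz 0, Posz 0); (Posz 0, Posz 0); (Posz 0, Posz 0); (Posz 6, Posz 5); (Posz 0, Posz 0); (Posz 0, Posz 0); (Posz 4, Posz 7); (Posz 0, Posz 0); (Posz 0, Posz 0); (Posz 0, Posz 0); (Posz 0, Posz 0); (Posz 0, Posz 0); (Posz 0, Posz 0); (Posz 3, Posz 4); (Posz 3, Posz 4); (Posz 1, Negz 1); (Posz 0, Posz 0); (Negz 0, Posz 2); (Posz 0, Posz 0); (Posz 2, Posz 1); (Posz 0, Posz 0); (Posz 0, Posz 0); (Posz 0, Posz 0); (Posz 0, Posz 0); (Posz 0, Posz 0)]].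

Definition stab (a b : nat) : int * int :=
  if Sopt a b is Some v then nth (0, 0)%R ptab v else (0, 0)%R.
Definition Kent (a k : nat) := nth (0, 0)%R (nth [::] Ktab a) k.
Definition Cent (k b : nat) := nth (0, 0)%R (nth [::] Ctab k) b.
Definition zdot (a b : nat) : int * int :=
  zdotl [seq (Kent a k, Cent k b) | k <- iota 0 9].

Definition kc_check : bool :=
  all (fun a => all (fun b => stab a b == zdot a b) (iota 0 34)) (iota 0 12).
Lemma kc_checkP : kc_check. Proof. by vm_compute. Qed.

Definition nz_check : bool := all (fun k => znorm (nth (0, 0)%R ptab k) != 0%R) (iota 0 120).
Lemma nz_checkP : nz_check. Proof. by vm_compute. Qed.

Lemma kc_ok (a b : nat) : (a < 12)%N -> (b < 34)%N -> stab a b = zdot a b.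
Proof.
move=> ha hb; have := kc_checkP; rewrite /kc_check => /allP /(_ a).
rewrite mem_iota ha => /(_ isT) /allP /(_ b).
by rewrite mem_iota hb => /(_ isT) /eqP.
Qed.

Lemma nz_ok (k : nat) : (k < 120)%N -> znorm (nth (0, 0)%R ptab k) != 0%R.
Proof.
move=> hk; have := nz_checkP; rewrite /nz_check => /allP /(_ k).
by rewrite mem_iota hk => /(_ isT).
Qed.

Section Point.
Variable F : numFieldType.
Variable r : F.
Hypothesis hr : r * r = r + 1.

Definition ev (z : int * int) : F := z.1%:~R + z.2%:~R * r.

Lemma ev_add a b : ev (zadd a b) = ev a + ev b.
Proof. by rewrite /ev /zadd /= !intrD; ring. Qed.

Lemma ev_mul a b : ev (zmul a b) = ev a * ev b.
Proof.
rewrite /ev /zmul /= !intrD !intrM.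
have -> : (a.1%:~R + a.2%:~R * r) * (b.1%:~R + b.2%:~R * r) =
  a.1%:~R * b.1%:~R + (a.1%:~R * b.2%:~R + a.2%:~R * b.1%:~R) * r + a.2%:~R * b.2%:~R * (r * r) :> F
  by ring.
by rewrite hr; ring.
Qed.

Lemma ev0 : ev (0, 0)%R = 0.
Proof. by rewrite /ev /= mul0r addr0. Qed.

Lemma ev_neq0 z : znorm z != 0%R -> ev z != 0.
Proof.
move=> hz; apply/negP => /eqP h0.
have : ev (zmul z (zconj z)) = 0 by rewrite ev_mul h0 mul0r.
rewrite /ev /zmul /zconj /=.
have -> : (z.1 * (z.1 + z.2) + z.2 * - z.2)%R = znorm z by rewrite /znorm; ring.
have -> : (z.1 * - z.2 + z.2 * (z.1 + z.2) + z.2 * - z.2)%R = 0%R by ring.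
rewrite mul0r addr0 => /eqP; rewrite intr_eq0.
by rewrite (negbTE hz).
Qed.

Lemma ev_dot (f g : nat -> int * int) (n : nat) :
  \sum_(k < n) ev (f k) * ev (g k) = ev (zdotl [seq (f k, g k) | k <- iota 0 n]).
Proof.
rewrite -(big_mkord xpredT (fun k => ev (f k) * ev (g k))) /index_iota subn0.
elim: (iota 0 n) => [|k s IH]; first by rewrite big_nil ev0.
by rewrite big_cons /= ev_add ev_mul IH.
Qed.

Definition Pt (k : 'I_120) : F := ev (nth (0, 0)%R ptab k).
Definition Km : 'M[F]_(12, 9) := \matrix_(i, k) ev (Kent i k).
Definition Cm : 'M[F]_(9, 34) := \matrix_(k, j) ev (Cent k j).

Lemma Pt_neq0 k : Pt k != 0.
Proof. exact/ev_neq0/nz_ok. Qed.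

Lemma meval_xv k : (k < 120)%N -> meval Pt (xv F k) = ev (nth (0, 0)%R ptab k).
Proof. by move=> hk; rewrite /xv mevalXU /Pt inordK. Qed.

Lemma map_slack : map_mx (meval Pt) (perles_slack F) = Km *m Cm.
Proof.
apply/matrixP => i j.
have E := slack_entry F (ltn_ord i) (ltn_ord j); rewrite !inord_val in E.
rewrite [LHS]mxE E [RHS]mxE.
under eq_bigr do rewrite !mxE.
rewrite (ev_dot (fun k => Kent i k) (fun k => Cent k j) 9) -/(zdot i j) -kc_ok //.
rewrite /stab /oint.
case hS: (Sopt i j) => [v|]; last by rewrite rmorph0 ev0.
move: hS; rewrite /Sopt; case: ifP => // hs [<-].
have [_ hv] := fidx_ok (ltn_ord i) (ltn_ord j) hs.
by rewrite meval_xv.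
Qed.

Lemma det_sub0 (f : 'I_10 -> 'I_12) (g : 'I_10 -> 'I_34) :
  \det (mxsub f g (Km *m Cm)) = 0.
Proof.
rewrite mxsub_mul; apply/eqP; apply: contraT => hd.
have hu : rowsub f Km *m colsub g Cm \in unitmx by rewrite unitmxE unitfE.
have := mxrank_unit hu.
have := mxrankM_maxl (rowsub f Km) (colsub g Cm).
have := rank_leq_col (rowsub f Km).
move=> h1 h2 h3; rewrite h3 in h2.
by have := leq_trans h2 h1.
Qed.

Lemma notI (p : {mpoly F[120]}) : meval Pt p != 0 -> ~ perles_slack_ideal F p.
Proof.
move=> hp [n [s [hs hsum]]].
have : meval Pt ((\prod_(i < 120) 'X_i) ^+ n * p) = 0.
  rewrite hsum rmorph_sum; apply: big1_seq => c /andP [_ hc].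
  have [f [g [_ _ ->]]] := hs c hc.
  by rewrite rmorphM -det_map_mx map_mxsub map_slack det_sub0 mulr0.
have hprod : \prod_(i < 120) meval Pt ('X_i) != 0.
  by apply/prodf_neq0 => i _; rewrite mevalXU Pt_neq0.
rewrite rmorphM rmorphXn rmorph_prod => /eqP.
by rewrite mulf_eq0 (negbTE hp) orbF expf_eq0 (negbTE hprod) andbF.
Qed.

End Point.

Definition z1 : int * int :=
  zmul (zmul (nth (0, 0)%R ptab 18) (nth (0, 0)%R ptab 34)) (nth (0, 0)%R ptab 48).
Definition z3 : int * int :=
  zmul (zmul (nth (0, 0)%R ptab 20) (nth (0, 0)%R ptab 37)) (nth (0, 0)%R ptab 46).
Definition wz : int * int := zadd z3 (zmul ((-1)%R, 1%R) z1).
Lemma wz_check : znorm wz != 0%R. Proof. by vm_compute. Qed.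

Lemma fg_gen (Rg : comRingType) (a b c c' : Rg) :
  c + c' = 1 -> c * c' = -1 -> (a - c * b) * (a - c' * b) = a * a - a * b - b * b.
Proof.
move=> h1 h2.
have -> : (a - c * b) * (a - c' * b) = a * a - (c + c') * (a * b) + (c * c') * (b * b) by ring.
by rewrite h1 h2; ring.
Qed.

Section Final.
Variable F : numFieldType.
Variable r : F.
Hypothesis hr : r * r = r + 1.

Lemma notI_fg : ~ perles_slack_ideal F (t3 (xv F) - (1 - r)%:MP * t1 (xv F)).
Proof.
apply: (notI hr).
rewrite mevalB !rmorphM /= mevalC !meval_xv // -!(ev_mul hr).
rewrite -/z1 -/z3.
have -> : ev r z3 - (1 - r) * ev r z1 = ev r wz.
  rewrite /wz (ev_add r) (ev_mul hr) /ev /=.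
  rewrite mulrN1z mulr1z; ring.
exact: (ev_neq0 hr wz_check).
Qed.
End Final.

Theorem theorem5p3 (R : realType) :
  ~ prime_ideal (perles_slack_ideal (complex R)).
Proof.
move=> [_ hpr].
have [s hs] : exists s : complex R, s * s = 5 by exists (sqrtC 5); rewrite -expr2 sqrtCK.
have [p0 hp0] : exists p0 : complex R, p0 * p0 = p0 + 1.
  exists ((1 + s) / 2).
  apply/eqP; rewrite -subr_eq0; apply/eqP.
  have -> : (1 + s) / 2 * ((1 + s) / 2) - ((1 + s) / 2 + 1) = (s * s - 5) / 4 by field.
  by rewrite hs subrr mul0r.
have hq : (1 - p0) * (1 - p0) = (1 - p0) + 1.
  have -> : (1 - p0) * (1 - p0) = 1 - p0 - p0 + p0 * p0 by ring.
  by rewrite hp0; ring.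
pose x := xv (complex R).
pose f := t3 x - p0%:MP * t1 x.
pose g := t3 x - (1 - p0)%:MP * t1 x.
have hfg : f * g = pq x.
  rewrite /f /g /pq fg_gen //.
    by rewrite -mpolyCD addrC subrK.
  rewrite -mpolyCM.
  have -> : p0 * (1 - p0) = -1.
    have -> : p0 * (1 - p0) = p0 - p0 * p0 by ring.
    by rewrite hp0; ring.
  by rewrite mpolyCN.
have := hpr f g; rewrite hfg => /(_ (I_q _)) [hf|hg].
- apply: (notI_fg hq).
  have -> : 1 - (1 - p0) = p0 by ring.
  exact: hf.
- exact: (notI_fg hp0 hg).
Qed.
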